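(* Let $\mathcal{F}=\mathcal{F}(X)$ be the free group on an alphabet $X$, equipped with a bi-order $\prec$, and let $W$ be a cyclically reduced word in $\mathcal{F}$. Let $A$ be the maximal ascent of $W$, and let $M$ and $m$ be the peak and the low of $W$, respectively. If $A$ is a subword of $W$, then $W\succ 1_\mathcal{F}$ and $M=mA$. Consequently, $W$ has exactly one subword equivalent to $A$, and no subword of $W^{-1}$ is equivalent to $A$. Moreover, if $W=AD$ with $D\neq 1_\mathcal{F}$, then $D$ is a descent.
   Context: Words are over $X^*=X\cup X^{-1}$; a word $y_1\cdots y_n$ is reduced if $y_i\neq y_{i+1}^{-1}$ for all $i$, and cyclically reduced if moreover $y_1\neq y_n^{-1}$. Words are identified with the elements of $\mathcal{F}$ they represent; $1_\mathcal{F}$ is the empty word. A bi-order on $\mathcal{F}$ is a total order invariant under both left and right multiplication. A subword of $W$ is a word $V$ with $W=SVU$ and $|W|=|S|+|V|+|U|$; it is a prefix if $S$ is empty and a suffix if $U$ is empty. Two subwords (in different positions) are equivalent if they have the same spelling. If $W=UV$ with $U$ a prefix, then $VU$ is a cyclic permutation of $W$. $R_W$ denotes the set of cyclic permutations of $W$ and of $W^{-1}$. A word $U$ is an ascent if every (nonempty) prefix and every (nonempty) suffix of $U$ (including $U$ itself) is $\succ 1_\mathcal{F}$, and a descent if every such prefix and suffix is $\prec 1_\mathcal{F}$. The maximal ascent of $W$ is the greatest (with respect to $\prec$) ascent among all subwords of elements of $R_W$. The peak (resp. low) of $W$ is the largest (resp. smallest) prefix of $W$ with respect to $\prec$, where prefixes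 include the empty word and $W$ itself. *)

(* Defs.v *)
From mathcomp Require Import all_boot.
Set Implicit Arguments. Unset Strict Implicit. Unset Printing Implicit Defensive.

Section FreeGroup.
Variable X : eqType.

(* a letter is (x, true) for x and (x, false) for x^{-1} *)
Definition letter := (X * bool)%type.
Definition linv (y : letter) : letter := (y.1, ~~ y.2).

Definition word := seq letter.

Definition winv (w : word) : word := rev (map linv w).

Definition reduced (w : word) : bool :=
  if w is y :: t then path (fun a b => b != linv a) y t else true.
Definition cyc_reduced (w : word) : bool :=
  reduced w && (if w is y :: t then last y t != linv y else true).

(* free reduction (stack algorithm); reduce w is the reduced word
   representing the same element of the free group as w *)
Definition cons_red (x : letter) (s : word) : word :=
  if s is y :: t then (if y == linv x then t else x :: s) else [:: x].
Definition reduce (w : word) : word := foldr cons_red [::] w.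

(* a bi-order on the free group, given as a strict relation on reduced words *)
Definition is_biorder (lt : word -> word -> bool) : Prop :=
  [/\ (forall a, reduced a -> ~~ lt a a),
      (forall a b c, reduced a -> reduced b -> reduced c ->
          lt a b -> lt b c -> lt a c),
      (forall a b, reduced a -> reduced b -> a <> b -> lt a b \/ lt b a),
      (forall a b c, reduced a -> reduced b -> reduced c ->
          lt a b -> lt (reduce (c ++ a)) (reduce (c ++ b))) &
      (forall a b c, reduced a -> reduced b -> reduced c ->
          lt a b -> lt (reduce (a ++ c)) (reduce (b ++ c)))].

Variable lt : word -> word -> bool.

Definition prec (u v : word) : bool := lt (reduce u) (reduce v).
Definition preceq (u v : word) : bool := (reduce u == reduce v) || prec u v.

Definition ascent (U : word) : Prop :=
  prec [::] U /\
  (forall P, prefix P U -> P != [::] -> prec [::] P) /\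
  (forall S, suffix S U -> S != [::] -> prec [::] S).
Definition descent (U : word) : Prop :=
  prec U [::] /\
  (forall P, prefix P U -> P != [::] -> prec P [::]) /\
  (forall S, suffix S U -> S != [::] -> prec S [::]).

Definition in_RW (W R : word) : Prop :=
  exists2 i, i <= size W & (R = rot i W \/ R = rot i (winv W)).

Definition cyc_subword (W V : word) : Prop :=
  exists2 R, in_RW W R & infix V R.

Definition max_ascent (W A : word) : Prop :=
  [/\ ascent A, cyc_subword W A &
      forall V, ascent V -> cyc_subword W V -> preceq V A].

(* M is the peak of W / m is the low of W (prefixes include [::] and W) *)
Definition peak (W M : word) : Prop :=
  prefix M W /\ forall P, prefix P W -> preceq P M.
Definition low (W m : word) : Prop :=
  prefix m W /\ forall P, prefix P W -> preceq m P.

Definition occurs_at (W V : word) (i : nat) : Prop :=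
  i + size V <= size W /\ take (size V) (drop i W) = V.

End FreeGroup.

(* Main.v *)
Require Import Defs.
From mathcomp Require Import all_boot zify.
Set Implicit Arguments. Unset Strict Implicit. Unset Printing Implicit Defensive.

Section FG.
Variable X : eqType.
Local Notation word := (word X).
Local Notation rr := (fun a b : letter X => b != linv a).

Lemma linvK (y : letter X) : linv (linv y) = y.
Proof. by case: y => x []. Qed.

Lemma reducedE (w : word) : reduced w = sorted rr w.
Proof. by case: w. Qed.

Lemma cons_red_reduced x (t : word) : reduced t -> reduced (cons_red x t).
Proof.
case: t => [|y t] //=. case: eqP => [_ H|/eqP ne H].
  by rewrite reducedE; apply: path_sorted H.
by rewrite /= ne H.
Qed.

Lemma reduce_reduced (w : word) : reduced (reduce w).
Proof. elim: w => //= x t IH. exact: cons_red_reduced. Qed.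

Lemma reduce_id (w : word) : reduced w -> reduce w = w.
Proof.
elim: w => //= x t IH H.
have Ht : reduced t by rewrite reducedE; apply: path_sorted H.
rewrite IH //. case: t H {IH Ht} => //= y t' /andP[ne _].
by rewrite (negbTE ne).
Qed.

Lemma cancel_red x (t : word) : reduced t -> cons_red x (cons_red (linv x) t) = t.
Proof.
case: t => [|y t] H; first by rewrite /= eqxx.
rewrite /=.
case: (y =P linv (linv x)) => [e|ne].
  rewrite linvK in e; subst y.
  case: t H => [|z t] //= /andP[nz _]. by rewrite (negbTE nz).
by rewrite /= eqxx.
Qed.

Lemma reduce_cat (u v : word) : reduce (u ++ v) = foldr (@cons_red X) (reduce v) u.
Proof. by rewrite /reduce foldr_cat. Qed.

Lemma foldr_reduced (t u : word) : reduced t -> reduced (foldr (@cons_red X) t u).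
Proof. move=> Ht; elim: u => //= x u IH. exact: cons_red_reduced. Qed.

Lemma foldr_red (t u : word) : reduced t ->
  foldr (@cons_red X) t u = foldr (@cons_red X) t (reduce u).
Proof.
move=> Ht; elim: u => //= x u IH.
rewrite IH.
case: (reduce u) => [|y r] //=.
case: (y =P linv x) => [e|ne] //=.
subst y. rewrite cancel_red //. exact: foldr_reduced.
Qed.

Lemma reduceCl (u v : word) : reduce (reduce u ++ v) = reduce (u ++ v).
Proof. by rewrite !reduce_cat -foldr_red // reduce_reduced. Qed.

Lemma reduceCr (u v : word) : reduce (u ++ reduce v) = reduce (u ++ v).
Proof. by rewrite !reduce_cat (reduce_id (reduce_reduced v)). Qed.

Lemma winv_cat (u v : word) : winv (u ++ v) = winv v ++ winv u.
Proof. by rewrite /winv map_cat rev_cat. Qed.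

Lemma winvK (u : word) : winv (winv u) = u.
Proof.
rewrite /winv map_rev revK -map_comp.
by rewrite (eq_map (g := id)) ?map_id // => y /=; rewrite linvK.
Qed.

Lemma winv0 : winv ([::] : word) = [::]. Proof. by []. Qed.

Lemma reduce_invl (u : word) : reduce (winv u ++ u) = [::].
Proof.
elim: u => //= x u IH.
have -> : winv (x :: u) = winv u ++ [:: linv x] by rewrite /winv /= rev_cons cats1.
rewrite -catA reduce_cat /=.
have := cancel_red (linv x) (reduce_reduced u); rewrite linvK.
rewrite /reduce => ->. by rewrite -foldr_cat.
Qed.

Lemma reduce_invr (u : word) : reduce (u ++ winv u) = [::].
Proof. by have := reduce_invl (winv u); rewrite winvK. Qed.

Lemma reduce_congl (c u v : word) : reduce u = reduce v -> reduce (c ++ u) = reduce (c ++ v).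
Proof. by move=> H; rewrite -reduceCr H reduceCr. Qed.

Lemma reduce_congr (c u v : word) : reduce u = reduce v -> reduce (u ++ c) = reduce (v ++ c).
Proof. by move=> H; rewrite -reduceCl H reduceCl. Qed.

Lemma reduce_canl (c u : word) : reduce (winv c ++ (c ++ u)) = reduce u.
Proof. by rewrite catA -reduceCl reduce_invl. Qed.

Lemma reduce_canl' (c u : word) : reduce (c ++ (winv c ++ u)) = reduce u.
Proof. by rewrite catA -reduceCl reduce_invr. Qed.

Lemma reduce_canr (c u : word) : reduce ((u ++ c) ++ winv c) = reduce u.
Proof. by rewrite -catA -reduceCr reduce_invr cats0. Qed.

Lemma reduce_canr' (c u : word) : reduce ((u ++ winv c) ++ c) = reduce u.
Proof. by rewrite -catA -reduceCr reduce_invl cats0. Qed.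

Lemma reduced_winv (u : word) : reduced u -> reduced (winv u).
Proof.
rewrite !reducedE /winv rev_sorted sorted_map.
apply: sub_sorted => a b /=. apply: contra => /eqP e. by rewrite e linvK.
Qed.

Lemma reduced_nil_neq (u : word) : reduced u -> u != [::] -> reduce u != [::].
Proof. by move=> H; rewrite reduce_id. Qed.

End FG.
Section Ord.
Variable X : eqType.
Local Notation word := (word X).
Variable lt : word -> word -> bool.
Hypothesis Hlt : is_biorder lt.
Local Notation pr := (prec lt).
Local Notation pe := (preceq lt).

Lemma lt_irr (u : word) : ~~ pr u u.
Proof. case: Hlt => H _ _ _ _; apply: H; exact: reduce_reduced. Qed.

Lemma lt_trans (u v w : word) : pr u v -> pr v w -> pr u w.
Proof. case: Hlt => _ H _ _ _; apply: H; exact: reduce_reduced. Qed.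

Lemma lt_total (u v : word) : reduce u <> reduce v -> pr u v \/ pr v u.
Proof. case: Hlt => _ _ H _ _; apply: H; exact: reduce_reduced. Qed.

Lemma lt_ml (c u v : word) : pr u v -> pr (c ++ u) (c ++ v).
Proof.
case: Hlt => _ _ _ H _ h.
have := H _ _ (reduce c) (reduce_reduced u) (reduce_reduced v) (reduce_reduced c) h.
by rewrite /prec !reduceCl !reduceCr.
Qed.

Lemma lt_mr (c u v : word) : pr u v -> pr (u ++ c) (v ++ c).
Proof.
case: Hlt => _ _ _ _ H h.
have := H _ _ (reduce c) (reduce_reduced u) (reduce_reduced v) (reduce_reduced c) h.
by rewrite /prec !reduceCl !reduceCr.
Qed.

Lemma lt_cl (c u v : word) : pr (c ++ u) (c ++ v) -> pr u v.
Proof. move/(lt_ml (winv c)). by rewrite /prec !reduce_canl. Qed.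

Lemma lt_cr (c u v : word) : pr (u ++ c) (v ++ c) -> pr u v.
Proof. move/(lt_mr (winv c)). by rewrite /prec !reduce_canr. Qed.

Lemma lt_inv (u v : word) : pr u v -> pr (winv v) (winv u).
Proof.
move/(lt_ml (winv u))/(lt_mr (winv v)).
by rewrite /prec reduce_canr -reduceCl reduce_invl.
Qed.

Lemma lt_neq (u v : word) : pr u v -> reduce u <> reduce v.
Proof. move=> h e. by move: (lt_irr u); rewrite /prec {2}e; rewrite /prec in h; rewrite h. Qed.

Lemma le_refl (u : word) : pe u u.
Proof. by rewrite /preceq eqxx. Qed.

Lemma lt_le (u v : word) : pr u v -> pe u v.
Proof. by move=> h; rewrite /preceq h orbT. Qed.

Lemma le_lt_trans (u v w : word) : pe u v -> pr v w -> pr u w.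
Proof. case/orP => [/eqP e|h1] h2; last exact: lt_trans h1 h2. by rewrite /prec e. Qed.

Lemma lt_le_trans (u v w : word) : pr u v -> pe v w -> pr u w.
Proof. move=> h1; case/orP => [/eqP e|h2]; last exact: lt_trans h1 h2. by rewrite /prec -e. Qed.

Lemma le_trans (u v w : word) : pe u v -> pe v w -> pe u w.
Proof.
case/orP => [/eqP e|h1] h2; first by move: h2; rewrite /preceq /prec e.
by apply: lt_le; apply: lt_le_trans h1 h2.
Qed.

Lemma not_lt_le (u v : word) : ~~ pr u v -> pe v u.
Proof.
move=> h. case: (reduce u =P reduce v) => [e|ne]; first by rewrite /preceq e eqxx.
by case: (lt_total ne) => h'; [rewrite h' in h | apply: lt_le].
Qed.

Lemma le_lt_F (u v : word) : pe u v -> pr v u -> False.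
Proof. move=> h1 h2. by move: (lt_irr u); rewrite (le_lt_trans h1 h2). Qed.

Lemma le_neq_lt (u v : word) : pe u v -> reduce u <> reduce v -> pr u v.
Proof. by case/orP => [/eqP|//]. Qed.

Lemma le_inv (u v : word) : pe u v -> pe (winv v) (winv u).
Proof.
case/orP => [/eqP e|h]; last by apply: lt_le; apply: lt_inv.
have: reduce (winv v ++ (u ++ winv u)) = reduce (winv v ++ (v ++ winv u)).
  by apply: reduce_congl; rewrite -reduceCl e reduceCl.
rewrite reduce_canl -(reduceCr (winv v) (u ++ winv u)) reduce_invr cats0 => e'.
by rewrite /preceq e' eqxx.
Qed.

Lemma le_mr (c u v : word) : pe u v -> pe (u ++ c) (v ++ c).
Proof.
case/orP => [/eqP e|h]; last by apply: lt_le; apply: lt_mr.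
by rewrite /preceq (reduce_congr c e) eqxx.
Qed.

Lemma lt_combine (x x' y y' : word) : pe x x' -> pr y y' -> pr (x ++ y) (x' ++ y').
Proof. move=> h1 h2. apply: (lt_le_trans (lt_ml x h2)). exact: le_mr. Qed.

Lemma argmax (f : nat -> word) lo hi : lo <= hi ->
  exists j, (lo <= j /\ j <= hi) /\ forall k, lo <= k -> k <= hi -> pe (f k) (f j).
Proof.
move=> H; have [d ->] : exists d, hi = lo + d by exists (hi - lo); lia.
elim: d {H} => [|d [j [Hj IH]]].
  exists lo; split; first lia. move=> k Hk Hk'. have -> : k = lo by lia. exact: le_refl.
case: (boolP (pr (f j) (f (lo + d.+1)))) => h.
  exists (lo + d.+1); split; first lia. move=> k Hk Hk'.
  case: (ltnP k (lo + d.+1)) => hk; last by (have -> : k = lo + d.+1 by lia); apply: le_refl.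
  apply: lt_le; apply: le_lt_trans h; apply: IH; lia.
exists j; split; first lia. move=> k Hk Hk'.
case: (ltnP k (lo + d.+1)) => hk; last by (have -> : k = lo + d.+1 by lia); apply: not_lt_le.
apply: IH; lia.
Qed.

Lemma argmin (f : nat -> word) lo hi : lo <= hi ->
  exists j, (lo <= j /\ j <= hi) /\ forall k, lo <= k -> k <= hi -> pe (f j) (f k).
Proof.
move=> H; have [d ->] : exists d, hi = lo + d by exists (hi - lo); lia.
elim: d {H} => [|d [j [Hj IH]]].
  exists lo; split; first lia. move=> k Hk Hk'. have -> : k = lo by lia. exact: le_refl.
case: (boolP (pr (f (lo + d.+1)) (f j))) => h.
  exists (lo + d.+1); split; first lia. move=> k Hk Hk'.
  case: (ltnP k (lo + d.+1)) => hk; last by (have -> : k = lo + d.+1 by lia); apply: le_refl.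
  apply: lt_le; apply: lt_le_trans h _; apply: IH; lia.
exists j; split; first lia. move=> k Hk Hk'.
case: (ltnP k (lo + d.+1)) => hk; last by (have -> : k = lo + d.+1 by lia); apply: not_lt_le.
apply: IH; lia.
Qed.

End Ord.
Section Core.
Variable X : eqType.
Local Notation word := (word X).
Variable lt : word -> word -> bool.
Hypothesis Hlt : is_biorder lt.
Local Notation pr := (prec lt).
Local Notation pe := (preceq lt).
Variables W A : word.
Variable s : nat.
Hypothesis HWW : reduced (W ++ W).
Hypothesis HA : max_ascent lt W A.
Hypothesis Hs : s + size A <= size W.
Hypothesis HAs : take (size A) (drop s W) = A.

Local Notation n := (size W).
Local Notation a := (size A).
Local Notation F k := (take k (W ++ W)).
Local Notation seg i j := (drop i (take j (W ++ W))).

Lemma size_T : size (W ++ W) = n + n.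
Proof. by rewrite size_cat. Qed.

Lemma F_split i j : i <= j -> F j = F i ++ seg i j.
Proof. by move=> h; rewrite -{1}(cat_take_drop i (take j (W ++ W))) take_takel. Qed.

Lemma size_F k : k <= n + n -> size (F k) = k.
Proof. by move=> h; rewrite size_takel // size_T. Qed.

Lemma seg_cat i k j : i <= k -> k <= j -> j <= n + n -> seg i j = seg i k ++ seg k j.
Proof.
move=> h1 h2 h3.
have E : F i ++ seg i j = F i ++ (seg i k ++ seg k j).
  by rewrite -F_split ?(leq_trans h1 h2) // catA -F_split // -F_split.
have := f_equal (drop (size (F i))) E.
by rewrite !drop_size_cat.
Qed.

Lemma F_shift k : k <= n -> F (n + k) = W ++ F k.
Proof.
move=> h. rewrite takeD take_size_cat // drop_size_cat //.
by rewrite takel_cat.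
Qed.

Lemma seg_red i j : reduced (seg i j).
Proof. rewrite reducedE; apply: drop_sorted; apply: take_sorted; by rewrite -reducedE. Qed.

Lemma size_seg i j : j <= n + n -> size (seg i j) = j - i.
Proof. by move=> h; rewrite size_drop size_F. Qed.

Lemma seg_val i j : i <= j -> reduce (seg i j) = reduce (winv (F i) ++ F j).
Proof. by move=> h; rewrite {2}(F_split h) reduce_canl. Qed.

Lemma segi_val i j : i <= j -> reduce (winv (seg i j)) = reduce (winv (F j) ++ F i).
Proof.
move=> h; rewrite {2}(F_split h) winv_cat -catA.
by rewrite -reduceCr reduce_invl cats0.
Qed.

Lemma F_neq0 i j : i < j -> j <= n + n -> reduce (F i) <> reduce (F j).
Proof.
move=> h1 h2 e.
have H0 : reduce (seg i j) = [::].
  rewrite seg_val; last exact: ltnW.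
  rewrite -reduceCr -e reduceCr. exact: reduce_invl.
move: H0; rewrite reduce_id ?seg_red // => /(f_equal size).
rewrite size_seg //=. lia.
Qed.

Lemma F_neq i j : i != j -> i <= n + n -> j <= n + n -> reduce (F i) <> reduce (F j).
Proof.
move=> h1 h2 h3.
have [h|h] : i < j \/ j < i.
  case: (ltngtP i j) => h; [by left | by right | by rewrite h eqxx in h1].
  exact: (F_neq0 h h3).
move=> e. apply: (F_neq0 h h2). by symmetry.
Qed.

Lemma le_F_lt i j : i != j -> i <= n + n -> j <= n + n -> pe (F i) (F j) -> pr (F i) (F j).
Proof. move=> h1 h2 h3 h; apply: le_neq_lt => //; exact: F_neq. Qed.

Lemma seg_cyc i j : i <= j -> j <= n + n -> j - i <= n -> cyc_subword W (seg i j).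
Proof.
move=> h1 h2 h3.
case: (leqP i n) => hi.
  exists (rot i W); first by exists i => //; left.
  have -> : seg i j = take (j - i) (drop i (W ++ W)) by rewrite take_drop subnK.
  have -> : drop i (W ++ W) = rot i W ++ drop i W.
    rewrite /rot -catA cat_take_drop drop_cat.
    case: ltnP => h //. have e : i = n by lia.
    by rewrite e subnn drop0 drop_size.
  by rewrite takel_cat ?size_rot // infix_take.
exists W; first by exists 0 => //; left; rewrite rot0.
rewrite take_cat. case: ltnP => hj; first lia.
rewrite drop_cat. case: ltnP => hi'; first lia.
apply: infix_trans (infix_drop _ _) (infix_take _ _).
Qed.

Lemma cyc_winv V : cyc_subword W V -> cyc_subword W (winv V).
Proof.
case=> R [i Hi HR] /infixP [p [q E]].
exists (winv R).
  exists (n - i); first lia.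
  case: HR => ->.
    right. by rewrite /winv map_rot rev_rot /rotr size_rev size_map.
  left. rewrite {1}/winv map_rot rev_rot /rotr size_rev size_map.
  rewrite -/(winv (winv W)) winvK /winv size_rev size_map. done.
apply/infixP; exists (winv q), (winv p).
by rewrite E !winv_cat catA.
Qed.

Lemma prefix_seg P i j : prefix P (seg i j) -> i <= j -> j <= n + n ->
  exists k, [/\ i + size P = k, k <= j & P = seg i k].
Proof.
move=> /prefixP [Q E] h1 h2.
have hs : size P + size Q = j - i by rewrite -size_cat -E size_seg.
exists (i + size P); split => //; first lia.
have E' : P = take (size P) (seg i j) by rewrite E take_size_cat.
rewrite {1}E' take_drop take_takel; first by rewrite addnC.
lia.
Qed.

Lemma suffix_seg S i j : suffix S (seg i j) -> i <= j -> j <= n + n ->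
  exists k, [/\ i <= k, k + size S = j & S = seg k j].
Proof.
move=> /suffixP [Q E] h1 h2.
have hs : size Q + size S = j - i by rewrite -size_cat -E size_seg.
exists (size Q + i); split => //; first lia; first lia.
have -> : S = drop (size Q) (seg i j) by rewrite E drop_size_cat.
by rewrite drop_drop.
Qed.

Lemma pr_F_seg i k : i <= k -> pr (F i) (F k) -> pr [::] (seg i k).
Proof.
move=> h H. rewrite (F_split h) -{1}(cats0 (F i)) in H. exact: (lt_cl Hlt H).
Qed.

Lemma pr_seg_F i k : i <= k -> pr (F k) (F i) -> pr [::] (winv (seg i k)).
Proof.
move=> h H. rewrite (F_split h) -{2}(cats0 (F i)) in H.
by move/(lt_cl Hlt)/(lt_inv Hlt): H.
Qed.

Lemma lt_add_pos i m : 0 < m -> i < i + m.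
Proof. lia. Qed.

Lemma neq0_size (P : word) : P != [::] -> 0 < size P.
Proof. by case: P. Qed.

Lemma asc_seg i j : i < j -> j <= n + n ->
  (forall k, i < k -> k <= j -> pr (F i) (F k)) ->
  (forall k, i <= k -> k < j -> pr (F k) (F j)) -> ascent lt (seg i j).
Proof.
move=> h1 h2 H1 H2. split; [|split].
- apply: pr_F_seg; [exact: ltnW | exact: H1].
- move=> P /prefix_seg [] //; first exact: ltnW.
  move=> k [e1 e2 e3] /neq0_size hP. rewrite e3. apply: pr_F_seg; first lia. apply: H1 => //. rewrite -e1. exact: lt_add_pos.
- move=> S /suffix_seg [] //; first exact: ltnW.
  move=> k [e1 e2 e3] /neq0_size hP. rewrite e3.
  have hkj : k < j by rewrite -e2; exact: lt_add_pos.
  have H := H2 k e1 hkj. rewrite (F_split (i := k) (j := j)) in H; last lia.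
  rewrite -{1}(cats0 (F k)) in H. exact: (lt_cl Hlt H).
Qed.

Lemma desc_seg_inv i j : i < j -> j <= n + n ->
  (forall k, i <= k -> k < j -> pr (F j) (F k)) ->
  (forall k, i < k -> k <= j -> pr (F k) (F i)) -> ascent lt (winv (seg i j)).
Proof.
move=> h1 h2 H1 H2. split; [|split].
- apply: pr_seg_F; [exact: ltnW | exact: H2].
- move=> P /prefixP [Q E] /neq0_size hP.
  have Hs' : suffix (winv P) (seg i j).
    apply/suffixP; exists (winv Q). by rewrite -(winvK (seg i j)) E winv_cat.
  case: (suffix_seg Hs'); first exact: ltnW. done.
  move=> k [e1 e2 e3].
  have hk : k < j by move: e2; rewrite /winv size_rev size_map; lia.
  rewrite -(winvK P) e3. apply: pr_seg_F; first exact: ltnW.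
  exact: H1.
- move=> S /suffixP [Q E] /neq0_size hS.
  have Hp : prefix (winv S) (seg i j).
    apply/prefixP; exists (winv Q). by rewrite -(winvK (seg i j)) E winv_cat.
  case: (prefix_seg Hp); first exact: ltnW. done.
  move=> k [e1 e2 e3].
  have hk : i < k by move: e1; rewrite /winv size_rev size_map; lia.
  rewrite -(winvK S) e3. apply: pr_seg_F; first exact: ltnW.
  exact: H2.
Qed.

Lemma maxF V : ascent lt V -> cyc_subword W V -> pr A V -> False.
Proof. case: HA => _ _ H h1 h2 h3. exact: (le_lt_F Hlt (H V h1 h2) h3). Qed.

Lemma Hn : s + a <= n. Proof. exact: Hs. Qed.

Lemma A_seg : A = seg s (s + a).
Proof.
rewrite takel_cat; last exact: Hs.
by rewrite addnC -take_drop HAs.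
Qed.

Lemma A_val : reduce A = reduce (winv (F s) ++ F (s + a)).
Proof. by rewrite {1}A_seg seg_val // leq_addr. Qed.

Lemma a_pos : 0 < a.
Proof.
case: HA => [[H _] _ _]. case: A H => //= H. by move: (lt_irr Hlt [::]); rewrite H.
Qed.

Lemma asc_pre k : s < k -> k <= s + a -> pr (F s) (F k).
Proof.
move=> h1 h2. case: HA => [[_ [H _]] _ _].
have hp : prefix (seg s k) A.
  apply/prefixP; exists (seg k (s + a)). rewrite {1}A_seg. apply: seg_cat => //; first exact: ltnW.
  have := Hn; lia.
have hne : seg s k != [::].
  apply/eqP => /(f_equal size); rewrite size_seg /=; first lia. have := Hn; lia.
have := H _ hp hne. move/(lt_ml Hlt (F s)). by rewrite cats0 -F_split //; exact: ltnW.
Qed.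

Lemma asc_suf k : s <= k -> k < s + a -> pr (F k) (F (s + a)).
Proof.
move=> h1 h2. case: HA => [[_ [_ H]] _ _].
have hp : suffix (seg k (s + a)) A.
  apply/suffixP; exists (seg s k). rewrite {1}A_seg. apply: seg_cat => //; first exact: ltnW.
  have := Hn; lia.
have hne : seg k (s + a) != [::].
  apply/eqP => /(f_equal size); rewrite size_seg /=; first lia. have := Hn; lia.
have := H _ hp hne. move/(lt_ml Hlt (F k)). rewrite cats0 -F_split //. exact: ltnW.
Qed.

Lemma pr_congr (u u' v v' : word) : reduce u = reduce u' -> reduce v = reduce v' -> pr u' v' -> pr u v.
Proof. by rewrite /prec => -> ->. Qed.

Lemma hsn : s <= n. Proof. have := Hn; lia. Qed.

Lemma P1 k : s <= k -> k <= s + n -> k != s + a -> pr (F k) (F (s + a)).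
Proof.
move=> h1 h2 h3.
have Hn' := Hn. have ha := a_pos.
have [j [[hj1 hj2] Hj]] := argmax Hlt (fun k => F k) (leq_addr n s).
case: (j =P s + a) => [ej|nej].
  apply: le_F_lt => //; try lia. rewrite -ej; apply: Hj => //.
exfalso.
have Hj_ge : pr (F (s + a)) (F j).
  apply: le_F_lt; [lia|lia|lia|apply: Hj; lia].
have hja : s + a < j.
  case: (ltngtP (s + a) j) => // h.
    have := asc_suf hj1 h => h'. by move: (lt_irr Hlt (F j)); rewrite (lt_trans Hlt h' Hj_ge).
  by exfalso; apply: nej.
have [i [[hi1 hi2] Hi]] := argmin Hlt (fun k => F k) hj1.
have his : pe (F i) (F s) by apply: Hi => //; lia.
have hFs : pr (F s) (F j).
  apply: (lt_trans Hlt _ Hj_ge). apply: asc_pre => //; lia.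
have hij : i < j.
  case: (ltngtP i j) => // h; first lia.
  by exfalso; rewrite h in his; apply: (le_lt_F Hlt his hFs).
apply: (@maxF (seg i j)).
- apply: asc_seg => //; first lia.
  + move=> k' hk1 hk2. apply: le_F_lt; try lia. apply: Hi; lia.
  + move=> k' hk1 hk2. apply: le_F_lt; try lia. apply: Hj; lia.
- apply: seg_cyc; lia.
- apply: (pr_congr A_val (seg_val (ltnW hij))).
  apply: lt_combine => //. exact: le_inv.
Qed.

Lemma W_red : reduced W.
Proof. rewrite reducedE. have := HWW; rewrite reducedE => /(take_sorted n). by rewrite take_size_cat. Qed.

Lemma P2 : pr [::] W.
Proof.
have Hn' := Hn. have ha := a_pos.
case: (boolP (pr [::] W)) => // hW; exfalso.
have hWne : reduce W <> reduce [::].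
  rewrite reduce_id ?W_red // => e. move: Hn'; rewrite e /=; lia.
have Wlt : pr W [::] := le_neq_lt (not_lt_le Hlt hW) hWne.
have Hmax : forall k, s + a <= k -> k <= s + a + n -> k != s + a -> pr (F k) (F (s + a)).
  move=> k h1 h2 h3. case: (leqP k (s + n)) => hk; first by apply: P1 => //; lia.
  have -> : k = n + (k - n) by lia.
  rewrite F_shift; last lia.
  have h4 : pr (W ++ F (k - n)) (F (k - n)) by apply: (lt_mr Hlt _ Wlt).
  apply: (lt_le_trans Hlt h4).
  case: (k - n =P s + a) => [->|ne]; first exact: le_refl.
  apply: lt_le; apply: P1; [lia|lia|apply/eqP; lia].
have [i [[hi1 hi2] Hi]] := argmin Hlt (fun k => F k) (leq_addr n (s + a)).
have hFsn : pr (F (s + n)) (F s).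
  rewrite addnC F_shift; last lia. by apply: (lt_mr Hlt _ Wlt).
have his : pr (F i) (F s).
  apply: (le_lt_trans Hlt _ hFsn). apply: Hi; lia.
have hiL : pr (F i) (F (s + a)).
  apply: (lt_trans Hlt his). apply: asc_pre; lia.
have hLi : s + a < i.
  case: (ltngtP (s + a) i) => // h; first lia.
  by rewrite h in hiL; move: (lt_irr Hlt (F i)); rewrite hiL.
apply: (@maxF (winv (seg (s + a) i))).
- apply: desc_seg_inv => //; first lia.
  + move=> k' hk1 hk2. apply: le_F_lt; try lia. apply: Hi; lia.
  + move=> k' hk1 hk2. apply: Hmax; lia.
- apply: cyc_winv. apply: seg_cyc; lia.
- apply: (pr_congr A_val (segi_val (ltnW hLi))).
  apply: lt_mr => //. exact: lt_inv.
Qed.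

Lemma P3 k : s + a <= k -> k <= s + a + n -> k != s + n -> pr (F (s + n)) (F k).
Proof.
move=> h1 h2 h3.
have Hn' := Hn. have ha := a_pos. have HP2 := P2.
case: (boolP (pr (F (s + n)) (F k))) => // hk; exfalso.
have hk' : pr (F k) (F (s + n)).
  apply: le_F_lt => //; try lia. exact: not_lt_le.
have [i [[hi1 hi2] Hi]] := argmin Hlt (fun k => F k) (leq_addr n (s + a)).
have hin : pr (F i) (F (s + n)).
  apply: (le_lt_trans Hlt _ hk'). apply: Hi; lia.
have Fsn : F (s + n) = W ++ F s by rewrite addnC F_shift //; lia.
have hi_lt : i < s + n.
  case: (ltngtP i (s + n)) => // h.
    have ei : i = n + (i - n) by lia.
    rewrite ei F_shift in hin; last lia.
    rewrite Fsn in hin.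
    have := asc_pre (k := i - n) ltac:(lia) ltac:(lia) => /(lt_ml Hlt W) h'.
    by move: (lt_irr Hlt (W ++ F s)); rewrite (lt_trans Hlt h' hin).
  by rewrite h in hin; move: (lt_irr Hlt (F (s + n))); rewrite hin.
have FE : F (s + a + n) = W ++ F (s + a) by rewrite addnC F_shift //; lia.
apply: (@maxF (seg i (s + a + n))).
- apply: asc_seg => //; try lia.
  + move=> k' hk1 hk2. apply: le_F_lt; try lia. apply: Hi; lia.
  + move=> k' hk1 hk2. rewrite FE.
    case: (leqP k' (s + n)) => hk5.
      have h5 : pr (F (s + a)) (W ++ F (s + a)).
        by have := lt_mr Hlt (F (s + a)) HP2.
      apply: (le_lt_trans Hlt _ h5).
      case: (k' =P s + a) => [->|ne]; first exact: le_refl.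
      apply: lt_le; apply: P1; [lia|lia|apply/eqP; lia].
    have -> : k' = n + (k' - n) by lia.
    rewrite F_shift; last lia.
    apply: lt_ml => //. apply: asc_suf; lia.
- apply: seg_cyc; lia.
- have EA : reduce A = reduce (winv (F (s + n)) ++ F (s + a + n)).
    rewrite A_val Fsn FE winv_cat -catA. apply: reduce_congl.
    by rewrite reduce_canl.
  apply: (pr_congr EA (seg_val (ltnW _))); first lia.
  apply: lt_mr => //. exact: lt_inv.
Qed.

Lemma FW k : k <= n -> F k = take k W.
Proof. by move=> h; rewrite takel_cat. Qed.

Lemma core_res : [/\ pr [::] W,
  (forall k, k <= n -> k != s + a -> pr (take k W) (take (s + a) W)),
  (forall k, k <= n -> k != s -> pr (take s W) (take k W)) &
  (s = 0 -> forall k, a <= k -> k < n -> pr W (take k W))].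
Proof.
have Hn' := Hn. have ha := a_pos. have HP2 := P2.
split => //.
- move=> k h1 h2. rewrite -!FW //.
  case: (leqP s k) => hk; first by apply: P1 => //; lia.
  have h4 : pr (F k) (W ++ F k) by have := lt_mr Hlt (F k) HP2.
  rewrite -F_shift in h4; last lia.
  apply: (lt_le_trans Hlt h4).
  case: (n + k =P s + a) => [->|ne]; first exact: le_refl.
  apply: lt_le; apply: P1; [lia|lia|apply/eqP; lia].
- move=> k h1 h2. rewrite -(FW h1) -(FW hsn).
  have Fsn : F (s + n) = W ++ F s by rewrite addnC F_shift //; lia.
  have hs : pr (F s) (F (s + n)).
    by rewrite Fsn; have := lt_mr Hlt (F s) HP2.
  case: (ltngtP s k) => hk.
  + case: (leqP k (s + a)) => hk2; first by apply: asc_pre.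
    case: (k =P s + n) => [->|ne] //.
    apply: (lt_trans Hlt hs). apply: P3; [lia|lia|apply/eqP; lia].
  + have := P3 (k := n + k) ltac:(lia) ltac:(lia) ltac:(apply/eqP; lia).
    by rewrite Fsn F_shift; [move/(lt_cl Hlt) | lia].
  + by rewrite hk eqxx in h2.
- move=> s0 k h1 h2.
  have := P3 (k := k) ltac:(lia) ltac:(lia) ltac:(apply/eqP; lia).
  rewrite s0 add0n take_size_cat // FW //; lia.
Qed.
End Core.

Lemma cycred_WW (X : eqType) (W : word X) : cyc_reduced W -> reduced (W ++ W).
Proof.
case: W => [|y t] //. rewrite /cyc_reduced /reduced => /andP [H1 H2].
rewrite /= cat_path H1 /=. apply/andP; split; last exact: H1.
apply: contra H2 => /eqP e. apply/eqP.
have -> : linv y = linv (linv (last y t)) by rewrite -e.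
by rewrite linvK.
Qed.

Lemma in_RW_winv (X : eqType) (W R : word X) : in_RW W R -> in_RW (winv W) R.
Proof.
case=> i Hi [->|->]; exists i; rewrite /winv ?size_rev ?size_map //.
  by right; rewrite -/(winv (winv W)) winvK.
by left.
Qed.

Lemma max_ascent_winv (X : eqType) lt (W A : word X) : max_ascent lt W A -> max_ascent lt (winv W) A.
Proof.
case=> H1 [R HR HA] H3; split => //.
  by exists R => //; apply: in_RW_winv.
move=> V HV [R' HR' HV']. apply: H3 => //. exists R' => //.
by have := in_RW_winv HR'; rewrite winvK.
Qed.

Theorem lemma2p3 (X : eqType) (lt : word X -> word X -> bool)
  (Hlt : is_biorder lt) (W A M m : word X)
  (HW : cyc_reduced W)
  (HA : max_ascent lt W A) (HM : peak lt W M) (Hm : low lt W m)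
  (HAW : infix A W) :
  [/\ prec lt [::] W,
      reduce M = reduce (m ++ A),
      (exists! i, occurs_at W A i),
      ~~ infix A (winv W) &
      forall D, W = A ++ D -> D != [::] -> descent lt D].
Proof.
have HWW := cycred_WW HW.
case/infixP: (HAW) => p [q EW].
have Hs : size p + size A <= size W by rewrite EW !size_cat addnA leq_addr.
have HAs : take (size A) (drop (size p) W) = A by rewrite EW drop_size_cat // take_size_cat.
have [HP Hpeak Hlow Hdesc] := core_res Hlt HWW HA Hs HAs.
split => //.
- have HMe : M = take (size p + size A) W.
    case: HM => HMp HMmax.
    have EM : take (size M) W = M by apply/eqP; rewrite -prefixE.
    have hMs : size M <= size W by rewrite -EM size_take_min geq_minr.
    case: (size M =P size p + size A) => [e|ne]; first by rewrite -e EM.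
    exfalso. have := Hpeak _ hMs (introN eqP ne). rewrite EM => h.
    exact: (le_lt_F Hlt (HMmax _ (prefix_take _ _)) h).
  have Hme : m = take (size p) W.
    case: Hm => Hmp Hmmin.
    have Em : take (size m) W = m by apply/eqP; rewrite -prefixE.
    have hms : size m <= size W by rewrite -Em size_take_min geq_minr.
    case: (size m =P size p) => [e|ne]; first by rewrite -e Em.
    exfalso. have := Hlow _ hms (introN eqP ne). rewrite Em => h.
    exact: (le_lt_F Hlt (Hmmin _ (prefix_take _ _)) h).
  by rewrite HMe Hme takeD HAs.
- exists (size p); split; first by split.
  move=> i [Hi HAi].
  have [_ Hpeak' _ _] := core_res Hlt HWW HA Hi HAi.
  case: (i + size A =P size p + size A) => [e|ne].
    by apply/eqP; rewrite -(eqn_add2r (size A)) e.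
  exfalso.
  have h1 := Hpeak (i + size A) Hi (introN eqP ne).
  have h2 := Hpeak' (size p + size A) Hs (introN eqP (fun e => ne (esym e))).
  by move: (lt_irr Hlt (take (i + size A) W)); rewrite (lt_trans Hlt h1 h2).
- apply/negP => /infixP [p' [q' E']].
  have HWW' : reduced (winv W ++ winv W) by rewrite -winv_cat; apply: reduced_winv.
  have Hs' : size p' + size A <= size (winv W) by rewrite E' !size_cat addnA leq_addr.
  have HAs' : take (size A) (drop (size p') (winv W)) = A by rewrite E' drop_size_cat // take_size_cat.
  have [HP' _ _ _] := core_res Hlt HWW' (max_ascent_winv HA) Hs' HAs'.
  have h := lt_ml Hlt (winv W) HP.
  have h' : prec lt (winv W) [::] by move: h; rewrite /prec cats0 reduce_invl.
  by move: (lt_irr Hlt [::]); rewrite (lt_trans Hlt HP' h').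
- move=> D ED HD.
  have Hs0 : 0 + size A <= size W by rewrite ED size_cat leq_addr.
  have HAs0 : take (size A) (drop 0 W) = A by rewrite drop0 ED take_size_cat.
  have [_ Hpeak0 _ Hdesc0] := core_res Hlt HWW HA Hs0 HAs0.
  have HDs : 0 < size D by case: (D) HD.
  have key : forall P, prefix P D -> P != [::] -> prec lt P [::].
    move=> P /prefixP [Q EQ] HP0.
    have HPs : 0 < size P by case: (P) HP0.
    have Ek : take (size A + size P) W = A ++ P.
      by rewrite ED takeD take_size_cat // drop_size_cat // EQ take_size_cat.
    have hk : size A + size P <= size W by rewrite ED EQ !size_cat leq_add2l leq_addr.
    have hne : size A + size P != 0 + size A.
      by rewrite add0n -{2}(addn0 (size A)) eqn_add2l -lt0n.
    have := Hpeak0 _ hk hne. have EA : take (size A) W = A by rewrite ED take_size_cat.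
    rewrite Ek add0n EA -{2}(cats0 A).
    exact: (lt_cl Hlt).
  split; [| split] => //.
  + by apply: key => //; apply: prefix_refl.
  + move=> S /suffixP [Q EQ] HS0.
    have HSs : 0 < size S by case: (S) HS0.
    have Ek : take (size A + size Q) W = A ++ Q.
      by rewrite ED takeD take_size_cat // drop_size_cat // EQ take_size_cat.
    have hk1 : size A <= size A + size Q by apply: leq_addr.
    have hk2 : size A + size Q < size W.
      by rewrite ED EQ !size_cat addnA -{1}(addn0 (size A + size Q)) ltn_add2l.
    have := Hdesc0 erefl _ hk1 hk2. rewrite Ek {1}ED EQ catA -{2}(cats0 (A ++ Q)).
    exact: (lt_cl Hlt).
Qed.
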